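(* For $\nu,\lambda\in\mathbb C$ and integers $0\le k\le n$, \[ d^k_n(\nu)=\sum_{j=0}^{n-k}\binom{n-k}{j}\,d^k_{n-j}(\lambda)\,(\nu-\lambda)^j. \]
   Context: For $\lambda\in\mathbb C$ and integers $0\le k\le n$, define $e^k_n(\lambda)$ by $e^n_n(\lambda)=n!$ and, for $1\le k\le n$, $e^{k-1}_n(\lambda)=e^k_n(\lambda)+(\lambda-1)e^{k-1}_{n-1}(\lambda)$. Put $d^k_n(\lambda)=e^k_n(\lambda)/k!$. *)

(* Defs.v *)
(* complex numbers are R[i] = complex R over R : realType
   (mathcomp-real-closed), so that taking R := Stdlib's R gives ℂ. *)
From HB Require Import structures.
From mathcomp Require Import all_boot all_order all_algebra.
From mathcomp Require Import complex reals.
Set Implicit Arguments. Unset Strict Implicit. Unset Printing Implicit Defensive.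
Import Order.TTheory GRing.Theory Num.Theory.
Local Open Scope ring_scope.

(* e_coef l n k  =  e^k_n(l) for 0 <= k <= n, defined literally by
     e^n_n(l) = n!,
     e^{k-1}_n(l) = e^k_n(l) + (l - 1) e^{k-1}_{n-1}(l)   (1 <= k <= n),
   i.e. by recursion on n and, for fixed n, on n - k.
   The inner fixpoint g d computes e^{n-d}_n.  Values for k > n are
   irrelevant (they equal n!). *)
Fixpoint e_coef (R : realType) (l : R[i]) (n : nat) : nat -> R[i] :=
  match n with
  | 0 => fun _ => 1
  | n'.+1 =>
      let prev := e_coef l n' in
      fun k =>
        (fix g (d : nat) : R[i] :=
           match d with
           | 0 => (n'.+1)`!%:R
           | d'.+1 => g d' + (l - 1) * prev (n' - d')%N
           end) (n'.+1 - k)%N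
  end.

Definition d_coef (R : realType) (l : R[i]) (n k : nat) : R[i] :=
  e_coef l n k / (k`!)%:R.

(* Main.v *)
Require Import Defs.
From HB Require Import structures.
From mathcomp Require Import all_boot all_order all_algebra.
From mathcomp Require Import complex reals.
From mathcomp Require Import ring zify.
From Stdlib Require Import Lia.
Import Order.TTheory GRing.Theory Num.Theory.
Local Open Scope ring_scope.
Lemma sum_widen (R : nmodType) (F : nat -> R) m n : (m <= n)%N ->
  (forall i, (m <= i)%N -> (i < n)%N -> F i = 0) ->
  \sum_(i < m) F i = \sum_(i < n) F i.
Proof.
move=> mn H; rewrite -!(big_mkord xpredT) (big_cat_nat (leq0n m) mn) /=.
rewrite [X in _ = _ + X]big1_seq ?addr0 // => i /andP[_].
by rewrite mem_index_iota => /andP[]; apply: H.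
Qed.
Lemma binA N i j : ('C(N, i + j) * 'C(i + j, j) = 'C(N, j) * 'C(N - j, i))%N.
Proof.
case: (leqP (i + j) N) => h; last first.
  have -> : 'C(N, i + j) = 0 by apply: bin_small.
  case: (leqP j N) => hj.
    have -> : 'C(N - j, i) = 0 by apply: bin_small; lia.
    by rewrite muln0.
  have -> : 'C(N, j) = 0 by apply: bin_small.
  by [].
have hj : (j <= N)%N by lia.
have pos : (0 < i`! * j`! * (N - (i + j))`!)%N by rewrite !muln_gt0 !fact_gt0.
apply/eqP; rewrite -(eqn_pmul2r pos); apply/eqP.
have e1 := bin_fact h. have e2 := @bin_fact (i + j) j (leq_addl _ _).
have e3 := bin_fact hj. have e4 : (i <= N - j)%N by lia.
have e5 := bin_fact e4.
have e6 : (N - j - i = N - (i + j))%N by lia.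
have e7 : (i + j - j = i)%N by lia.
rewrite e7 in e2; rewrite e6 in e5.
transitivity N`!; [rewrite -e1 -e2 | rewrite -e3 -e5]; ring.
Qed.

Lemma e_top (R : realType) (l : R[i]) n : e_coef l n n = (n`!)%:R.
Proof. by case: n => [|n] //=; rewrite subnn. Qed.
Lemma e_rec (R : realType) (l : R[i]) n k : (k <= n)%N ->
  e_coef l n.+1 k = e_coef l n.+1 k.+1 + (l - 1) * e_coef l n k.
Proof. move=> kn; rewrite /= subSn // subSS subKn //. Qed.

Definition E {R : comPzRingType} (a : R) n k :=
  \sum_(j < n.+1) ('C(n - k, j))%:R * ((n - j)`!)%:R * a ^+ j.

Lemma E_top (R : comPzRingType) (a : R) n : E a n n = (n`!)%:R.
Proof.
rewrite /E big_ord_recl subnn /= subn0 mulr1 mul1r big1 ?addr0 // => j _.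
by rewrite bin0n /= mul0r mul0r.
Qed.

Lemma E_rec (R : comPzRingType) (a : R) n k : (k <= n)%N ->
  E a n.+1 k = E a n.+1 k.+1 + a * E a n k.
Proof.
move=> kn; rewrite /E big_ord_recl [X in _ = X + _]big_ord_recl -addrA; congr (_ + _).
  by rewrite !bin0.
rewrite mulr_sumr -big_split /=; apply: eq_bigr => j _.
rewrite /bump /= add1n subSn // subSS binS natrD exprS; ring.
Qed.

Lemma e_closed (R : realType) (l : R[i]) n k : (k <= n)%N ->
  e_coef l n k = E (l - 1) n k.
Proof.
elim: n k => [|n IH] k.
  rewrite leqn0 => /eqP ->; by rewrite e_top E_top.
move=> kn; move: {2}(n.+1 - k)%N (erefl (n.+1 - k)%N) => d.
elim: d k kn => [|d IHd] k kn hd.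
  have -> : k = n.+1 by lia.
  by rewrite e_top E_top.
have kn' : (k <= n)%N by lia.
rewrite e_rec // E_rec // IH // IHd //; lia.
Qed.
Lemma key {R : comPzRingType} (a b : R) n k : (k <= n)%N ->
  E (a + b) n k = \sum_(j < (n - k).+1) ('C(n - k, j))%:R * E a (n - j) k * b ^+ j.
Proof.
move=> kn.
pose G (m j : nat) := ('C(n - k, m))%:R * ((n - m)`!)%:R * ('C(m, j))%:R
   * a ^+ (m - j) * b ^+ j : R.
have L : forall m : 'I_n.+1, ('C(n - k, m))%:R * ((n - m)`!)%:R * (a + b) ^+ m
    = \sum_(j < n.+1) G m j.
  move=> m; rewrite exprDn mulr_sumr.
  rewrite (eq_bigr (fun j : 'I_m.+1 => G m j)); last first.
    by move=> j _; rewrite /G -mulr_natl; ring.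
  apply: (@sum_widen _ (fun j => G m j)) => //.
  by move=> j hj _; rewrite /G (@bin_small m j) // mulr0 !mul0r.
rewrite /E (eq_bigr _ (fun m _ => L m)) exchange_big /=.
rewrite (@sum_widen _ (fun j => ('C(n - k, j))%:R * E a (n - j) k * b ^+ j)
   (n - k).+1 n.+1); last 2 first.
- by rewrite ltnS leq_subr.
- by move=> j hj _; rewrite bin_small // !mul0r.
apply: eq_bigr => j _.
rewrite -(big_mkord xpredT (fun m => G m j)) (@big_cat_nat _ _ _ j) //=; last by rewrite ltnW.
rewrite big1_seq ?add0r; last first.
  move=> m /andP[_]; rewrite mem_index_iota => /andP[_ hm].
  by rewrite /G (@bin_small m j) // mulr0 !mul0r.
have := big_addn 0 n.+1 j xpredT (fun m => G m j); rewrite add0n => ->.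
rewrite subSn ?(ltnSE (ltn_ord j)) // big_mkord /E mulr_sumr mulr_suml.
apply: eq_bigr => i _.
rewrite /G addnK.
have e1 : (n - (i + j) = n - j - i)%N by lia.
have e2 : (n - j - k = n - k - j)%N by lia.
rewrite e1 e2 addnC.
have e3 := binA (n - k) i j.
have e4 : (('C(n - k, i + j))%:R * ('C(i + j, j))%:R : R)
        = ('C(n - k, j))%:R * ('C(n - k - j, i))%:R by rewrite -!natrM e3.
rewrite addnC.
transitivity (('C(n - k, i + j))%:R * ('C(i + j, j))%:R * ((n - j - i)`!)%:R
   * a ^+ i * b ^+ j : R); first ring.
rewrite e4; ring.
Qed.

Theorem mainTheorem7 (R : realType) (nu l : R[i]) (n k : nat) :
  (k <= n)%N ->
  d_coef nu n k =
  \sum_(j < (n - k).+1)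
     ('C(n - k, j))%:R * d_coef l (n - j) k * (nu - l) ^+ j.
Proof.
move=> kn; rewrite /d_coef e_closed //.
have -> : nu - 1 = (l - 1) + (nu - l) by ring.
rewrite key // mulr_suml; apply: eq_bigr => j _.
rewrite e_closed; first ring.
have := ltn_ord j; lia.
Qed.
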